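(* Let $G$ be any finite simple graph, connected or not. Then there exists a connected distance exceptional graph $G''$ containing a copy of $G$ as an induced subgraph. If moreover $G$ is connected and $\iota(G)<\infty$, then $G''$ can be chosen so that this copy is isometric, i.e. $d_{G''}(u,v)=d_G(u,v)$ for all $u,v\in V(G)$.
   Context: For a connected graph $G$ on vertices $v_1,\dots,v_n$, its distance matrix is $D=(d(v_i,v_j))_{i,j=1}^n$, where $d$ is the shortest-path distance; $\vec 1$ denotes the all-ones vector. $G$ is distance exceptional if $D\vec x=\vec 1$ has no solution. A curvature potential is a vector $\vec x$ with $D\vec x=\vec 1$. Curvature index $\iota(G)\in\mathbb{R}\cup\{\infty\}$: if $G$ is distance exceptional or has a curvature potential $\vec x$ with $\vec 1^\top\vec x\neq0$, then $\iota(G)$ is the unique real number with $\{D\vec x:\vec 1^\top\vec x=1\}\cap\mathbb{R}\vec 1=\{\iota(G)\vec 1\}$; otherwise $\iota(G)=\infty$. *)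

(* Defs.v *)
From HB Require Import structures.
From mathcomp Require Import all_boot all_order all_algebra.
From mathcomp Require Import Rstruct.
From Stdlib Require Import Reals.
Set Implicit Arguments. Unset Strict Implicit. Unset Printing Implicit Defensive.
Import Order.TTheory GRing.Theory Num.Theory.
Local Open Scope ring_scope.

Definition simple_graph (T : finType) (e : rel T) : Prop :=
  symmetric e /\ irreflexive e.

Definition connected_graph (T : finType) (e : rel T) : Prop :=
  forall u v : T, connect e u v.

Definition walk_n (T : finType) (e : rel T) (n : nat) (u v : T) : bool :=
  [exists p : n.-tuple T, path e u p && (last u p == v)].

(* Shortest-path distance: least n (searched in 0..#|T|-1, which suffices for
   connected graphs since shortest paths are simple) with a walk of length n. *)
Definition gdist (T : finType) (e : rel T) (u v : T) : nat :=
  find (fun n => walk_n e n u v) (iota 0 #|T|).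

Definition distmx (T : finType) (e : rel T) : 'M[R]_#|T| :=
  \matrix_(i, j) (gdist e (enum_val i) (enum_val j))%:R.

Definition curvature_potential (T : finType) (e : rel T) (x : 'cV[R]_#|T|) : Prop :=
  distmx e *m x = const_mx 1.

Definition distance_exceptional (T : finType) (e : rel T) : Prop :=
  ~ exists x : 'cV[R]_#|T|, curvature_potential e x.

(* iota(G) < infinity: by definition, iota(G) is a real number exactly when G is
   distance exceptional or has a curvature potential x with 1^T x <> 0. *)
Definition curvature_index_finite (T : finType) (e : rel T) : Prop :=
  distance_exceptional e \/
  exists x : 'cV[R]_#|T|, curvature_potential e x /\ \sum_i x i 0 != 0.

(* Main.v *)
Require Import Defs.
From HB Require Import structures.
From mathcomp Require Import all_boot all_order all_algebra.
From mathcomp Require Import Rstruct.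
From Stdlib Require Import Reals.
From mathcomp Require Import ring lra zify.
Set Implicit Arguments. Unset Strict Implicit. Unset Printing Implicit Defensive.
Import Order.TTheory GRing.Theory Num.Theory.

Section Walks.
Variables (T : finType) (e : rel T).

Lemma walk_nP n u v :
  reflect (exists p : seq T, [/\ size p = n, path e u p & last u p = v])
          (walk_n e n u v).
Proof.
apply: (iffP existsP) => [[p /andP[hp /eqP hl]]|[p [hs hp hl]]].
  by exists p; rewrite size_tuple.
have hs' : size p == n by rewrite hs.
by exists (Tuple hs'); rewrite /= hp hl eqxx.
Qed.

Lemma walk0 u v : walk_n e 0 u v -> u = v.
Proof. by case/walk_nP => -[|x p] [] //= _ _ <-. Qed.

Lemma walk0_refl u : walk_n e 0 u u.
Proof. by apply/walk_nP; exists [::]. Qed.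

Lemma walkS n u v :
  walk_n e n.+1 u v <-> exists z, e u z /\ walk_n e n z v.
Proof.
split.
  case/walk_nP => -[|z p] [] //= [hs] /andP[hz hp] hl.
  by exists z; split => //; apply/walk_nP; exists p.
case=> z [hz /walk_nP [p [hs hp hl]]].
by apply/walk_nP; exists (z :: p); rewrite /= hs hz hp.
Qed.

Lemma walk1 u v : walk_n e 1 u v = e u v.
Proof.
apply/idP/idP.
  by case/walkS => z [hz /walk0 <-].
by move=> h; apply/walkS; exists v; split => //; apply: walk0_refl.
Qed.

Lemma walk_cat m n u z v :
  walk_n e m u z -> walk_n e n z v -> walk_n e (m + n) u v.
Proof.
case/walk_nP => p [hs hp hl] /walk_nP [q [hs' hq hl']].
apply/walk_nP; exists (p ++ q); rewrite size_cat hs hs' cat_path hp last_cat hl.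
by split.
Qed.

Lemma gdist_le n u v : walk_n e n u v -> gdist e u v <= n.
Proof.
move=> h; rewrite /gdist.
case: (ltnP n #|T|) => hn.
  rewrite leqNgt; apply/negP => /(before_find 0).
  by rewrite nth_iota // add0n h.
by rewrite (leq_trans (find_size _ _)) // size_iota.
Qed.

Lemma gdist_walk u v : gdist e u v < #|T| -> walk_n e (gdist e u v) u v.
Proof.
move=> h.
have := @nth_find _ 0 (fun n => walk_n e n u v) (iota 0 #|T|).
rewrite has_find size_iota => /(_ h).
by rewrite nth_iota // add0n.
Qed.

Lemma gdist_conn u v : connect e u v ->
  gdist e u v < #|T| /\ walk_n e (gdist e u v) u v.
Proof.
case/connectP => p hp ->.
case: (shortenP hp) => p' hp' hu _.
have hs : size p' < #|T|.
  by have := max_card (mem (u :: p')); rewrite (card_uniqP hu).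
have hw : walk_n e (size p') u (last u p') by apply/walk_nP; exists p'.
have hl : gdist e u (last u p') < #|T| by apply: leq_ltn_trans (gdist_le hw) hs.
by split => //; apply: gdist_walk.
Qed.

Lemma gdist_eq k u v : connect e u v -> walk_n e k u v ->
  (forall n, walk_n e n u v -> k <= n) -> gdist e u v = k.
Proof.
move=> hc hk hmin; apply/eqP; rewrite eqn_leq gdist_le //=.
by apply: hmin; case: (gdist_conn hc).
Qed.

Hypothesis esym : symmetric e.

Lemma walk_rev n u v : walk_n e n u v -> walk_n e n v u.
Proof.
elim: n u => [|n IH] u.
  by move/walk0 => ->; apply: walk0_refl.
case/walkS => z [hz /IH hw].
rewrite -addn1; apply: walk_cat hw _; by rewrite walk1 esym.
Qed.

Lemma gdist_sym u v : gdist e u v = gdist e v u.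
Proof.
apply/eqP; rewrite eqn_leq /gdist.
have key : forall n, walk_n e n u v = walk_n e n v u.
  by move=> n; apply/idP/idP; apply: walk_rev.
by rewrite (eq_find key) leqnn.
Qed.

End Walks.

Lemma walk_connect (T : finType) (e : rel T) n u v : walk_n e n u v -> connect e u v.
Proof. by case/walk_nP => p [_ hp <-]; apply/connectP; exists p. Qed.

Lemma walk_proj (T1 T2 : finType) (e1 : rel T1) (e2 : rel T2) (f : T1 -> T2)
  (hf : forall x y, e1 x y -> e2 (f x) (f y) \/ f x = f y) n u v :
  walk_n e1 n u v -> exists2 m, m <= n & walk_n e2 m (f u) (f v).
Proof.
elim: n u => [|n IH] u.
  by move/walk0 => ->; exists 0 => //; apply: walk0_refl.
case/walkS => z [hz /IH [m hm hw]].
case: (hf _ _ hz) => [he|heq].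
  by exists m.+1 => //; apply/walkS; exists (f z).
by exists m; [apply: leqW | rewrite heq].
Qed.

Lemma walk_map (T1 T2 : finType) (e1 : rel T1) (e2 : rel T2) (f : T1 -> T2)
  (hf : forall x y, e1 x y -> e2 (f x) (f y)) n u v :
  walk_n e1 n u v -> walk_n e2 n (f u) (f v).
Proof.
elim: n u => [|n IH] u.
  by move/walk0 => ->; apply: walk0_refl.
case/walkS => z [hz /IH hw]; apply/walkS; exists (f z); split => //; exact: hf.
Qed.

Lemma connect_map (T1 T2 : finType) (e1 : rel T1) (e2 : rel T2) (f : T1 -> T2)
  (hf : forall x y, e1 x y -> e2 (f x) (f y)) u v :
  connect e1 u v -> connect e2 (f u) (f v).
Proof.
by case/gdist_conn => _ /(walk_map hf) /walk_connect.
Qed.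

Local Open Scope ring_scope.

Lemma excep_of_kernel (T : finType) (e : rel T) (Y : T -> R) :
  (forall v, \sum_t Y t * (gdist e t v)%:R = 0) -> \sum_t Y t != 0 ->
  distance_exceptional e.
Proof.
move=> hk hs [x hx].
have h1 : \sum_(i < #|T|) Y (enum_val i) * (distmx e *m x) i 0 = \sum_t Y t.
  rewrite hx (big_enum_val (A := T)) /=; apply: eq_bigr => i _.
  by rewrite mxE mulr1.
move: hs; rewrite -h1.
under eq_bigr do rewrite mxE big_distrr /=.
rewrite exchange_big /=.
under eq_bigr => j _.
  under eq_bigr do rewrite mxE mulrA.
  rewrite -big_distrl /=.
  rewrite -(big_enum_val (A := T) (fun t => Y t * (gdist e t (enum_val j))%:R)).
  rewrite hk mul0r.
  over.
by rewrite big1 // eqxx.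
Qed.

Lemma univ_connected (T : finType) (e : rel T) (z : T) (hs : symmetric e)
  (hz : forall t, t != z -> e z t) : connected_graph e.
Proof.
have hc : forall a, connect e a z.
  move=> a; case: (eqVneq a z) => [->|ha]; first exact: connect0.
  by apply: connect1; rewrite hs hz.
move=> u v; apply: connect_trans (hc u) _.
case: (eqVneq v z) => [->|hv]; first exact: connect0.
by apply: connect1; rewrite hz.
Qed.

Lemma dist_univ (T : finType) (e : rel T) (z : T) (hs : symmetric e)
  (hi : irreflexive e) (hz : forall t, t != z -> e z t) u v :
  gdist e u v = if u == v then 0%N else if e u v then 1%N else 2%N.
Proof.
have hc : forall a, connect e a z.
  move=> a; case: (eqVneq a z) => [->|ha]; first exact: connect0.
  by apply: connect1; rewrite hs hz.
have hcuv : connect e u v.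
  apply: connect_trans (hc u) _.
  case: (eqVneq v z) => [->|hv]; first exact: connect0.
  by apply: connect1; rewrite hz.
case: (eqVneq u v) => [<-|huv].
  by apply: gdist_eq => //; apply: walk0_refl.
case: ifP => he.
  apply: gdist_eq => //; first by rewrite walk1.
  by case=> // /walk0 h; rewrite h eqxx in huv.
apply: gdist_eq => //.
  have hu : u != z.
    by apply/eqP => hu; subst u; move: he; rewrite hz // eq_sym.
  have hv : v != z.
    by apply/eqP => hv; subst v; move: he; rewrite hs hz.
  apply: (walk_cat (n := 1) (m := 1) (z := z)); rewrite walk1 ?hz //.
  by rewrite hs hz.
case=> [/walk0 h|[|n] //]; first by rewrite h eqxx in huv.
by rewrite walk1 he.
Qed.
Local Open Scope ring_scope.

Lemma sigma_rat (T : finType) (e : rel T) (hsym : symmetric e) (x : 'cV[R]_#|T|) :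
  curvature_potential e x -> exists q : rat, \sum_i x i 0 = ratr q.
Proof.
move=> hx.
pose DQ : 'M[rat]_#|T| := \matrix_(i, j) (gdist e (enum_val i) (enum_val j))%:R.
have hD : map_mx ratr DQ = distmx e.
  by apply/matrixP => i j; rewrite !mxE ratr_nat.
have hDt : (distmx e)^T = distmx e.
  by apply/matrixP => i j; rewrite !mxE gdist_sym.
have hrow : (const_mx 1 : 'rV[R]_#|T|) = x^T *m distmx e.
  by rewrite -[in RHS]hDt -trmx_mul hx trmx_const.
have hsub : (map_mx (ratr : rat -> R) (const_mx 1 : 'rV[rat]_#|T|) <= map_mx (ratr : rat -> R) DQ)%MS.
  apply/submxP; exists x^T; rewrite hD -hrow.
  by apply/matrixP => i j; rewrite !mxE rmorph1.
rewrite map_submx in hsub.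
case/submxP: hsub => xq hxq.
exists (\sum_i xq 0 i).
have -> : \sum_i x i 0 = (const_mx 1 *m x : 'M[R]_1) 0 0.
  by rewrite mxE; apply: eq_bigr => i _; rewrite mxE mul1r.
have -> : (const_mx 1 : 'rV[R]_#|T|) = map_mx ratr xq *m distmx e.
  by rewrite -hD -map_mxM -hxq; apply/matrixP => i j; rewrite !mxE rmorph1.
rewrite -mulmxA hx mxE rmorph_sum /=; apply: eq_bigr => i _.
by rewrite !mxE mulr1.
Qed.

Local Close Scope ring_scope.
Definition cls (k : nat) : nat := if k < 3 then 0 else if k < 5 then 1 else 2.
Definition dn (k m : nat) : nat :=
  if k == m then 0 else if (cls k == 0) || (cls m == 0) then 1 else 2.
Local Open Scope ring_scope.
Definition Yn (k : nat) : R := if cls k == 0%N then 1 else - (1/2).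

Lemma test (m : nat) : (m < 7)%nat -> \sum_(i < 7) Yn i * (dn i m)%:R = 0.
Proof.
rewrite !big_ord_recr big_ord0 /=.
case: m => [|[|[|[|[|[|[|//]]]]]]] _; rewrite /Yn /dn /cls /=. all: lra.
Qed.

Definition e1 (T : finType) (e : rel T) : rel (T + 'I_7) := fun a b =>
  match a, b with
  | inl u, inl v => e u v
  | inl _, inr k => (cls k < 2)%nat
  | inr k, inl _ => (cls k < 2)%nat
  | inr k, inr k' => (k != k') && ((cls k == 0%N) || (cls k' == 0%N))
  end.

Definition Y1 (T : finType) (t : T + 'I_7) : R :=
  match t with inl _ => 0 | inr k => Yn k end.

Lemma part1 (T : finType) (e : rel T) (hG : simple_graph e) :
  exists (T'' : finType) (e'' : rel T'') (f : T -> T''),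
      [/\ simple_graph e'', connected_graph e'', distance_exceptional e'',
          injective f & forall u v : T, e'' (f u) (f v) = e u v].
Proof.
case: hG => hs hi.
have hs1 : symmetric (e1 e).
  move=> [a|a] [b|b] //=.
  by rewrite eq_sym orbC.
have hi1 : irreflexive (e1 e).
  by move=> [a|a] /=; [exact: hi | rewrite eqxx].
pose z : T + 'I_7 := inr ord0.
have hz : forall t, t != z -> e1 e z t.
  move=> [a|a] //= ha; apply/andP; split => //.
  by rewrite eq_sym; apply: contraNneq ha => ->.
exists (T + 'I_7)%type, (e1 e), inl; split => //.
- exact: univ_connected hz.
- apply: (@excep_of_kernel _ _ (@Y1 T)).
    move=> v; rewrite big_sumType /= big1 ?add0r; last by move=> *; rewrite mul0r.
    under eq_bigr do rewrite (dist_univ hs1 hi1 hz).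
    case: v => [u|k] /=.
      rewrite !big_ord_recr big_ord0 /= /Yn /cls /=; lra.
    transitivity (\sum_(i < 7) Yn i * (dn i k)%:R); last exact: test (ltn_ord k).
    apply: eq_bigr => i _; congr (_ * _%:R).
    rewrite /dn /=.
    have -> : (inr i == inr k :> T + 'I_7) = (i == k) by [].
    case: (eqVneq i k) => [->|hik] /=; first by rewrite eqxx.
    by rewrite val_eqE (negbTE hik).
  rewrite big_sumType /= big1 ?add0r // !big_ord_recr big_ord0 /= /Yn /cls /=.
  by apply/eqP; lra.
- by move=> x y [].
Qed.

Bind Scope ring_scope with R.

Section Part2.
Variables (T : finType) (e : rel T) (w : T) (N c m : nat).
Hypotheses (hs : symmetric e) (hi : irreflexive e) (hc : connected_graph e).

Definition H := ('I_N + 'I_c * 'I_m)%type.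
Definition part (h : H) : nat :=
  match h with inl i => val i | inr p => (N + val p.1)%N end.
Definition e2 : rel (T + H) := fun a b =>
  match a, b with
  | inl u, inl v => e u v
  | inl u, inr _ => u == w
  | inr _, inl u => u == w
  | inr h, inr h' => part h != part h'
  end.
Definition proj (t : T + H) : T := match t with inl u => u | inr _ => w end.

Lemma e2_sym : symmetric e2.
Proof. by move=> [a|a] [b|b] //=; rewrite ?hs // eq_sym. Qed.

Lemma e2_irr : irreflexive e2.
Proof. by move=> [a|a] /=; rewrite ?hi ?eqxx. Qed.

Lemma proj_hom x y : e2 x y -> e (proj x) (proj y) \/ proj x = proj y.
Proof.
case: x y => [a|a] [b|b] /=; try by right.
- by left.
- by move/eqP => ->; right.
- by move/eqP => ->; right.
Qed.

Lemma e2_conn : connected_graph e2.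
Proof.
have hw : forall t, connect e2 t (inl w).
  move=> [u|h].
    by apply: (connect_map (e1 := e) (e2 := e2) (f := inl)); [by [] | exact: hc].
  by apply: connect1; rewrite /= eqxx.
move=> u v; apply: connect_trans (hw u) _.
by rewrite (sym_connect_sym e2_sym).
Qed.

Lemma d_ll u v : gdist e2 (inl u) (inl v) = gdist e u v.
Proof.
apply: gdist_eq; first exact: e2_conn.
  apply: (walk_map (e1 := e) (e2 := e2) (f := inl)); first by [].
  by case: (gdist_conn (hc u v)).
move=> n /(walk_proj proj_hom) [k hk /= hw].
exact: leq_trans (gdist_le hw) hk.
Qed.

Lemma d_rl h u : gdist e2 (inr h) (inl u) = (gdist e w u).+1.
Proof.
apply: gdist_eq; first exact: e2_conn.
  apply/walkS; exists (inl w); split; first by rewrite /= eqxx.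
  apply: (walk_map (e1 := e) (e2 := e2) (f := inl)); first by [].
  by case: (gdist_conn (hc w u)).
case=> [/walk0 //|n /walkS [z [hz hw]]].
have hpz : proj z = w by case: z hz {hw} => [a /eqP|a].
move: hw => /(walk_proj proj_hom) [k hk]; rewrite hpz /= => hw.
exact: leq_trans (gdist_le hw) hk.
Qed.

Lemma d_lr h u : gdist e2 (inl u) (inr h) = (gdist e w u).+1.
Proof. by rewrite gdist_sym ?d_rl //; exact: e2_sym. Qed.

Lemma d_rr h h' : gdist e2 (inr h) (inr h') =
  if h == h' then 0%N else if part h != part h' then 1%N else 2%N.
Proof.
have hcn := e2_conn (inr h) (inr h').
case: (eqVneq h h') => [<-|hh].
  by apply: gdist_eq => //; apply: walk0_refl.
case: ifP => hp.
  apply: gdist_eq => //; first by rewrite walk1.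
  by case=> // /walk0 [] heq; rewrite heq eqxx in hh.
apply: gdist_eq => //.
  apply: (walk_cat (n := 1) (m := 1) (z := inl w)); rewrite walk1 /= eqxx //.
case=> [/walk0 [] heq|[|n] //]; first by rewrite heq eqxx in hh.
by rewrite walk1 /= hp.
Qed.


Local Open Scope ring_scope.
Variables (X : T -> R) (bs bm : R).
Hypothesis hX : forall u, \sum_g (gdist e u g)%:R * X g = 1.
Hypotheses (hbs : bs = 1 + \sum_g X g)
  (hbm : (m%:R - 2) * bm = - (1 + \sum_g X g))
  (hsum : 1 + N%:R * bs + (c * m)%:R * bm = 0).

Definition bv (h : H) : R := match h with inl _ => bs | inr _ => bm end.
Definition Y2 (t : T + H) : R :=
  match t with inl u => X u + (u == w)%:R | inr h => bv h end.

Lemma sum_bv : \sum_h bv h = -1.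
Proof.
rewrite big_sumType /= !sumr_const card_ord card_prod !card_ord.
rewrite -[bs *+ _]mulr_natl -[bm *+ _]mulr_natl.
by move: hsum; rewrite -addrA addrC => /eqP; rewrite addr_eq0 => /eqP.
Qed.

Lemma sum_pick (F : T -> R) : \sum_g (g == w)%:R * F g = F w.
Proof.
rewrite (bigD1 w) //= eqxx mul1r big1 ?addr0 // => g /negbTE ->.
by rewrite mul0r.
Qed.


Lemma gdist0 (U : finType) (f : rel U) (hf : connected_graph f) u : gdist f u u = 0%N.
Proof. by apply: gdist_eq => //; apply: walk0_refl. Qed.

Lemma d_ii (i i' : 'I_N) : gdist e2 (inr (inl i')) (inr (inl i)) = (i' != i).
Proof.
rewrite d_rr /=; have -> : (inl i' == inl i :> H) = (i' == i) by [].
case: (eqVneq i' i) => [//|h].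
by rewrite ifT //; apply: contraNneq h => /val_inj.
Qed.

Lemma d_pi (p : 'I_c * 'I_m) (i : 'I_N) : gdist e2 (inr (inr p)) (inr (inl i)) = 1%N.
Proof.
rewrite d_rr /=; have -> : (N + p.1 != i)%N by rewrite neq_ltn (leq_trans (ltn_ord i)) ?leq_addr ?orbT.
by [].
Qed.

Lemma d_ip (p : 'I_c * 'I_m) (i : 'I_N) : gdist e2 (inr (inl i)) (inr (inr p)) = 1%N.
Proof. by rewrite gdist_sym ?d_pi //; exact: e2_sym. Qed.

Lemma d_pp (p q : 'I_c * 'I_m) : gdist e2 (inr (inr p)) (inr (inr q)) =
   if p == q then 0%N else if p.1 != q.1 then 1%N else 2%N.
Proof.
rewrite d_rr /= eqn_add2l (inj_eq val_inj).
by have -> : (inr p == inr q :> H) = (p == q) by [].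
Qed.


Lemma sumX_dist u : \sum_g X g * (gdist e g u)%:R = 1.
Proof.
rewrite -[RHS](hX u); apply: eq_bigr => g _; by rewrite mulrC (gdist_sym hs).
Qed.

Lemma kernel_l u : \sum_t Y2 t * (gdist e2 t (inl u))%:R = 0.
Proof.
rewrite big_sumType /=.
have -> : \sum_h Y2 (inr h) * (gdist e2 (inr h) (inl u))%:R
         = \sum_h bv h * ((gdist e w u).+1)%:R.
  by apply: eq_bigr => h _; rewrite d_rl.
rewrite -big_distrl /= sum_bv.
have -> : \sum_g Y2 (inl g) * (gdist e2 (inl g) (inl u))%:R
   = \sum_g X g * (gdist e g u)%:R + \sum_g (g == w)%:R * (gdist e g u)%:R.
  by rewrite -big_split; apply: eq_bigr => g _; rewrite d_ll /= mulrDl.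
rewrite sumX_dist sum_pick -addn1 natrD; ring.
Qed.

Lemma sumG h : \sum_g Y2 (inl g) * (gdist e2 (inl g) (inr h))%:R = 2 + \sum_g X g.
Proof.
have -> : \sum_g Y2 (inl g) * (gdist e2 (inl g) (inr h))%:R
   = \sum_g (gdist e w g)%:R * X g + \sum_g X g
     + \sum_g (g == w)%:R * ((gdist e w g).+1)%:R.
  rewrite -!big_split; apply: eq_bigr => g _; rewrite d_lr /= -addn1 natrD.
  ring.
rewrite hX sum_pick gdist0 //; ring.
Qed.

Lemma count_neq n (i : 'I_n) : \sum_(i' < n) ((i' != i) : nat)%:R = (n.-1)%:R :> R.
Proof.
rewrite (bigD1 i) //= eqxx add0r.
rewrite (eq_bigr (fun _ => 1)); last by move=> j /= ->.
by rewrite sumr_const cardC1 card_ord.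
Qed.

Lemma count_pp (q : 'I_c * 'I_m) :
  \sum_(p : 'I_c * 'I_m) (if p == q then 0%N else if p.1 != q.1 then 1%N else 2%N)%:R
  = (c.-1 * m + 2 * m.-1)%:R :> R.
Proof.
case: q => k l.
pose F := fun p : 'I_c * 'I_m =>
  ((if p == (k, l) then 0%N else if p.1 != (k, l).1 then 1%N else 2%N)%:R : R).
transitivity (\sum_(k' < c) \sum_(l' < m) F (k', l')).
  by rewrite pair_bigA; apply: eq_bigr => -[].
rewrite /F /= (bigD1 k) //=.
have -> : \sum_(l' < m) (if (k, l') == (k, l) then 0%N else if k != k then 1%N else 2%N)%:R
    = 2 * \sum_(l' < m) ((l' != l) : nat)%:R :> R.
  rewrite big_distrr /=; apply: eq_bigr => l' _.
  rewrite xpair_eqE eqxx /=; case: (l' == l) => //=; ring.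
rewrite count_neq.
have -> : \sum_(k' < c | k' != k) \sum_(l' < m)
   (if (k', l') == (k, l) then 0%N else if k' != k then 1%N else 2%N)%:R
   = \sum_(k' < c | k' != k) (m%:R : R).
  apply: eq_bigr => k' hk.
  transitivity (\sum_(l' < m) (1 : R)).
    by apply: eq_bigr => l' _; rewrite xpair_eqE (negbTE hk).
  by rewrite sumr_const card_ord.
rewrite sumr_const cardC1 card_ord -[_ *+ _]mulr_natl natrD !natrM.
ring.
Qed.

Lemma kernel_r h : \sum_t Y2 t * (gdist e2 t (inr h))%:R = 0.
Proof.
rewrite big_sumType /= sumG.
case: h => [i | q].
  have -> : \sum_h' Y2 (inr h') * (gdist e2 (inr h') (inr (inl i)))%:R
      = bs * (N.-1)%:R + bm * (c * m)%:R.
    rewrite big_sumType /=; congr (_ + _).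
      rewrite -(count_neq i) big_distrr /=; apply: eq_bigr => i' _.
      by rewrite d_ii.
    transitivity (\sum_(p : 'I_c * 'I_m) bm).
      by apply: eq_bigr => p _; rewrite d_pi mulr1.
    by rewrite sumr_const card_prod !card_ord mulr_natr.
  have hN : N = N.-1.+1 by case: N i => [[]|].
  have hNe : (N%:R : R) = (N.-1)%:R + 1 by rewrite {1}hN -natr1.
  transitivity ((1 + N%:R * bs + (c * m)%:R * bm) + (1 + \sum_g X g - bs)).
    rewrite hNe; ring.
  by rewrite hsum -hbs subrr addr0.
have -> : \sum_h' Y2 (inr h') * (gdist e2 (inr h') (inr (inr q)))%:R
    = bs * N%:R + bm * (c.-1 * m + 2 * m.-1)%:R.
  rewrite big_sumType /=; congr (_ + _).
    transitivity (\sum_(i' < N) bs).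
      by apply: eq_bigr => i' _; rewrite d_ip mulr1.
    by rewrite sumr_const card_ord mulr_natr.
  rewrite -(count_pp q) big_distrr /=; apply: eq_bigr => p _.
  by rewrite d_pp.
have hc' : c = c.-1.+1 by case: q => k _; case: c k => [[]|].
have hm' : m = m.-1.+1 by case: q => _ l; case: m l => [[]|].
have hce : (c%:R : R) = (c.-1)%:R + 1 by rewrite {1}hc' -natr1.
have hme : (m%:R : R) = (m.-1)%:R + 1 by rewrite {1}hm' -natr1.
transitivity ((1 + N%:R * bs + (c * m)%:R * bm)
              + ((m%:R - 2) * bm + (1 + \sum_g X g))).
  rewrite !natrD !natrM hce hme; ring.
by rewrite hsum hbm addNr addr0.
Qed.

Lemma sumY2 : \sum_t Y2 t = \sum_g X g.
Proof.
rewrite big_sumType /= sum_bv big_split /=.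
have -> : \sum_g ((g == w) : nat)%:R = 1 :> R.
  by rewrite (bigD1 w) //= eqxx big1 ?addr0 // => g /negbTE ->.
ring.
Qed.

End Part2.

Local Open Scope ring_scope.
Lemma part2_constr (T : finType) (e : rel T) (hG : simple_graph e)
  (hc : connected_graph e) (w : T) (X : T -> R) (N c m : nat) (bs bm : R) :
  (forall u, \sum_g (gdist e u g)%:R * X g = 1) -> \sum_g X g != 0 ->
  bs = 1 + \sum_g X g -> (m%:R - 2) * bm = - (1 + \sum_g X g) ->
  1 + N%:R * bs + (c * m)%:R * bm = 0 ->
  exists (T'' : finType) (e'' : rel T'') (f : T -> T''),
      [/\ simple_graph e'', connected_graph e'', distance_exceptional e'',
          injective f
        & forall u v : T, e'' (f u) (f v) = e u v /\
                          gdist e'' (f u) (f v) = gdist e u v].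
Proof.
case: hG => hs hi => hX hσ hbs hbm hsum.
exists (T + H N c m)%type, (@e2 T e w N c m), inl; split.
- split; [exact: e2_sym | exact: e2_irr].
- exact: e2_conn.
- apply: (@excep_of_kernel _ _ (@Y2 T w N c m X bs bm)).
    move=> [u|h]; [exact: kernel_l | exact: kernel_r].
  by rewrite sumY2.
- by move=> x y [].
- by move=> u v; split => //; rewrite d_ll.
Qed.
Local Open Scope ring_scope.

Lemma int_nonneg (P Q : int) : 0 < Q -> 0 <= P + (absz P)%:Z * Q.
Proof. move=> hQ. nia. Qed.

Lemma natr_nonneg_int (z : int) : 0 <= z -> ((absz z)%:R : R) = z%:~R.
Proof. by move=> hz; rewrite natr_absz ger0_norm. Qed.

Lemma part2_final (T : finType) (e : rel T) (hG : simple_graph e)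
  (hc : connected_graph e) (x : 'cV[R]_#|T|) :
  curvature_potential e x -> \sum_i x i 0 != 0 ->
  exists (T'' : finType) (e'' : rel T'') (f : T -> T''),
      [/\ simple_graph e'', connected_graph e'', distance_exceptional e'',
          injective f
        & forall u v : T, e'' (f u) (f v) = e u v /\
                          gdist e'' (f u) (f v) = gdist e u v].
Proof.
move=> hx hsx; case: (hG) => hs hi.
pose X g := x (enum_rank g) 0.
have hsumX : \sum_g X g = \sum_i x i 0.
  rewrite (big_enum_val (A := T)) /=; apply: eq_bigr => i _.
  by rewrite /X enum_valK.
have hX : forall u, \sum_g (gdist e u g)%:R * X g = 1.
  move=> u; have h := congr1 (fun M : 'cV[R]_#|T| => M (enum_rank u) 0) hx.
  move: h; rewrite /= !mxE => h; rewrite -[RHS]h.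
  rewrite (big_enum_val (A := T)) /=; apply: eq_bigr => i _.
  by rewrite /X enum_valK mxE enum_rankK.
have [w _|h0] := pickP (@predT T); last first.
  by move: hsx; rewrite -hsumX big1 ?eqxx // => g; have := h0 g.
case: (sigma_rat hs hx) => q hq; rewrite -hsumX in hq hsx.
case: (eqVneq q (-1)) => [hq1|hq1].
  apply: (part2_constr hG hc w (N := 0) (c := 1) (m := 2)
          (bs := 1 + \sum_g X g) (bm := - (1/2))) => //.
    by rewrite hq hq1 rmorphN rmorph1; lra.
  lra.
pose kap := (1 + q)^-1.
pose P := numq kap; pose Q := denq kap.
have hQ : 0 < Q by apply: denq_gt0.
have hNn : 0 <= P + (absz P)%:Z * (Q + 1) by nia.
have hcn : 0 <= P + (absz P)%:Z * Q by nia.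
have hq0 : 1 + q != 0 by rewrite addrC addr_eq0.
pose s : R := 1 + \sum_g X g.
have hs0 : s != 0 by rewrite /s hq -(rmorph1 (ratr : rat -> R)) -rmorphD fmorph_eq0.
have hQ0 : (Q%:~R : R) != 0 by rewrite intr_eq0 gt_eqF.
have hsP : s * P%:~R = Q%:~R.
  have e1 : (P%:~R / Q%:~R : R) = s^-1.
    rewrite -(ratr_int R P) -(ratr_int R Q) -fmorph_div divq_num_den /kap fmorphV rmorphD rmorph1.
    by rewrite /s hq.
  have e2 : (P%:~R : R) = s^-1 * Q%:~R by rewrite -e1 divfK.
  by rewrite e2 mulVKf.
apply: (part2_constr hG hc w (N := absz (P + (absz P)%:Z * (Q + 1)))
          (c := absz (P + (absz P)%:Z * Q)) (m := (2 * absz Q + 2)%N)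
          (bs := s) (bm := - s / (2 * (absz Q)%:R))) => //.
  rewrite -/s natrD natrM (natr_nonneg_int (ltW hQ)).
  move: hQ0; generalize (Q%:~R : R) => QR hQR.
  field; rewrite ?pnatr_eq0 //.
rewrite -/s natrM natrD natrM (natr_nonneg_int hNn) (natr_nonneg_int hcn).
rewrite (natr_nonneg_int (ltW hQ)) !(intrD, intrM) -!pmulrn.
transitivity ((Q%:~R - s * P%:~R) / Q%:~R); last by rewrite hsP subrr mul0r.
move: hQ0; set QR := (Q%:~R : R); set PR := (P%:~R : R); move=> hQR.
field; rewrite ?pnatr_eq0 //.
Qed.


Theorem theorem5p3 (T : finType) (e : rel T) (hG : simple_graph e) :
  (exists (T'' : finType) (e'' : rel T'') (f : T -> T''),
      [/\ simple_graph e'', connected_graph e'', distance_exceptional e'',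
          injective f & forall u v : T, e'' (f u) (f v) = e u v])
  /\
  (connected_graph e -> curvature_index_finite e ->
    exists (T'' : finType) (e'' : rel T'') (f : T -> T''),
      [/\ simple_graph e'', connected_graph e'', distance_exceptional e'',
          injective f
        & forall u v : T, e'' (f u) (f v) = e u v /\
                          gdist e'' (f u) (f v) = gdist e u v]).
Proof.
split; first exact: part1 hG.
move=> hc [hexc | [x [hx hsx]]].
  by exists T, e, (fun t : T => t); split => //; move=> u v.
exact: (part2_final hG hc hx hsx).
Qed.
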